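(* If a polynomial $f \in \mathbb{N}_0[x^{\pm 1}]$ is hyper-monolithic, then $f$ is monolithic.
   Context: $\mathbb{N}_0[x^{\pm 1}]$ denotes the semiring of Laurent polynomials in $x$ with nonnegative integer coefficients; $\operatorname{supp}(f)$ is the set of exponents occurring in $f$ with nonzero coefficient. A nonzero $f$ is monolithic if whenever $f = gh$ with $g,h \in \mathbb{N}_0[x^{\pm 1}]$, one of $g, h$ is a monomial $c x^k$ ($c$ a positive integer, $k\in\mathbb{Z}$). Writing $f = \sum_{i=0}^{n} c_i x^{k_i}$ with $c_i$ positive integers and $k_0 > \cdots > k_n$, $f$ is hyper-monolithic if $|\operatorname{supp}(f)| > 1$ and either $k_0 - k_1 < k_i - k_{i+1}$ for every $i \in \{1,\ldots,n-1\}$, or $k_{n-1} - k_n < k_j - k_{j+1}$ for every $j \in \{0,\ldots,n-2\}$. *)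

(* Defs.v *)
From HB Require Import structures.
From mathcomp Require Import all_boot all_order all_algebra.
Set Implicit Arguments. Unset Strict Implicit. Unset Printing Implicit Defensive.
Import Order.TTheory GRing.Theory Num.Theory.

(* Laurent polynomials with nonnegative integer coefficients, N_0[x^{+-1}].
   Every such Laurent polynomial can be written x^e * p(x) with e : int and
   p : {poly nat}; we represent it by the pair (e, p).  Two representations
   denote the same Laurent polynomial iff their coefficient functions agree
   (lcoef below), so all notions are stated up to this extensional equality. *)
Record laurent := Laurent { lshift : int ; lpoly : {poly nat} }.

Definition lcoef (f : laurent) (k : int) : nat :=
  match k - lshift f with
  | Posz i => (lpoly f)`_i
  | Negz _ => 0%N
  end%R.

Definition lmul (g h : laurent) : laurent :=
  Laurent (lshift g + lshift h)%R (lpoly g * lpoly h)%R.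

Definition is_monomial (f : laurent) : Prop :=
  exists (c : nat) (k : int), (0 < c)%N /\
    forall i : int, lcoef f i = (if i == k then c else 0%N).

Definition lnonzero (f : laurent) : Prop := exists k : int, lcoef f k != 0%N.

Definition monolithic (f : laurent) : Prop :=
  lnonzero f /\
  forall g h : laurent, (forall k : int, lcoef f k = lcoef (lmul g h) k) ->
    is_monomial g \/ is_monomial h.

(* support of f, listed in strictly decreasing order k_0 > k_1 > ... > k_n *)
Definition lsupp (f : laurent) : seq int :=
  rev (map (fun i : nat => (lshift f + i%:Z)%R)
         (filter (fun i : nat => ((lpoly f)`_i)%R != 0%N) (iota 0 (size (lpoly f))))).

Definition hyper_monolithic (f : laurent) : Prop :=
  let ks := lsupp f in
  let m := size ks in
  (1 < m)%N /\
  ((forall i : nat, (1 <= i)%N -> (i.+1 < m)%N ->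
      (nth 0 ks 0 - nth 0 ks 1 < nth 0 ks i - nth 0 ks i.+1)%R)
   \/
   (forall j : nat, (j.+2 < m)%N ->
      (nth 0 ks (m - 2) - nth 0 ks (m - 1) < nth 0 ks j - nth 0 ks j.+1)%R)).

(* Main.v *)
Require Import Defs.
From mathcomp Require Import all_boot all_order all_algebra zify.
From Stdlib Require Import Classical.
Import Order.TTheory GRing.Theory Num.Theory.
Local Open Scope ring_scope.

Lemma sumP k (F : 'I_k -> nat) : (\sum_(j < k) F j)%R != 0%N <-> exists j, F j != 0%N.
Proof.
have -> : (\sum_(j < k) F j)%R = (\sum_(j < k) F j)%N by [].
rewrite sum_nat_eq0; split.
  by move/forallPn=> [j /= Hj]; exists j.
by move=> [j Hj]; apply/forallPn; exists j.
Qed.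

Lemma lcoef_def (f : laurent) k :
  lcoef f k != 0%N <-> exists i : nat, k = Defs.lshift f + (Posz i) /\ (lpoly f)`_i != 0%N.
Proof.
rewrite /lcoef; case E: (k - Defs.lshift f) => [i|i]; split.
- by move=> Hi; exists i; split => //; lia.
- move=> [j [Hj Hc]]; have -> : i = j by lia.
  by [].
- by rewrite eqxx.
- move=> [j [Hj Hc]]; move: E; rewrite NegzE; lia.
Qed.

Lemma coefM_nz (p q : {poly nat}) n :
  (p * q)`_n != 0%N <-> exists i j, (n = i + j)%N /\ p`_i != 0%N /\ q`_j != 0%N.
Proof.
have mE : forall a b : nat, (a * b)%R = (a * b)%N by [].
rewrite coefM sumP; split.
- move=> [j]; rewrite mE muln_eq0 negb_or => /andP[H1 H2].
  exists j, (n - j)%N; split => //; have := ltn_ord j; lia.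
- move=> [i [j [-> [H1 H2]]]].
  have Hi : (i < (i + j).+1)%N by lia.
  exists (Ordinal Hi) => /=; rewrite mE muln_eq0 negb_or.
  have -> : (i + j - i = j)%N by lia.
  by rewrite H1 H2.
Qed.

Lemma lmul_nz (g h : laurent) s :
  lcoef (lmul g h) s != 0%N <->
  exists a b, lcoef g a != 0%N /\ lcoef h b != 0%N /\ s = a + b.
Proof.
rewrite lcoef_def /=; split.
- move=> [n [Hs /coefM_nz [i [j [Hn [Hi Hj]]]]]].
  exists (Defs.lshift g + (Posz i)), (Defs.lshift h + (Posz j)); split; last split.
  + by apply/lcoef_def; exists i.
  + by apply/lcoef_def; exists j.
  + rewrite Hs Hn; lia.
- move=> [a [b [/lcoef_def [i [Ha Hi]] [/lcoef_def [j [Hb Hj]] Hs]]]].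
  exists (i + j)%N; split; first by rewrite Hs Ha Hb; lia.
  by apply/coefM_nz; exists i, j.
Qed.

Lemma mem_lsupp (f : laurent) s : s \in lsupp f <-> lcoef f s != 0%N.
Proof.
rewrite /lsupp mem_rev; split.
- move/mapP=> [i]; rewrite mem_filter mem_iota => /andP[Hc _] ->.
  by apply/lcoef_def; exists i.
- move/lcoef_def=> [i [-> Hc]]; apply/mapP; exists i => //.
  rewrite mem_filter mem_iota Hc /=; rewrite add0n.
  case: (ltnP i (size (lpoly f))) => // Hle.
  by move: Hc; rewrite nth_default.
Qed.

Definition rgt (x y : int) := y < x.

Lemma rgt_trans : transitive rgt.
Proof. by move=> y x z H1 H2; rewrite /rgt; apply: lt_trans H2 H1. Qed.

Lemma sorted_lsupp (f : laurent) : sorted rgt (lsupp f).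
Proof.
rewrite /lsupp rev_sorted sorted_map.
apply: sorted_filter.
  by move=> y x z; rewrite /relpre /= => H1 H2; apply: lt_trans H1 H2.
apply: (sub_sorted _ (iota_ltn_sorted 0 _)).
move=> x y /= Hxy; rewrite /rgt /=; lia.
Qed.

Section Lists.
Variable ks : seq int.
Hypothesis srt : sorted rgt ks.

Lemma nth_lt i j : (i < j)%N -> (j < size ks)%N -> nth 0 ks j < nth 0 ks i.
Proof.
move=> ij js; have is_ : (i < size ks)%N by apply: ltn_trans js.
by apply: (sorted_ltn_nth rgt_trans 0 srt); rewrite ?inE.
Qed.

Lemma nth_le i j : (i <= j)%N -> (j < size ks)%N -> nth 0 ks j <= nth 0 ks i.
Proof.
rewrite leq_eqVlt => /orP[/eqP -> //|ij] js.
by apply: ltW; apply: nth_lt.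
Qed.

Lemma mem_idx x : x \in ks -> exists i, (i < size ks)%N /\ x = nth 0 ks i.
Proof. by move=> Hx; exists (index x ks); rewrite index_mem nth_index. Qed.

Lemma listA x y : x \in ks -> y \in ks -> y < x -> x < nth 0 ks 0 ->
  exists i, (1 <= i)%N /\ (i.+1 < size ks)%N /\
    nth 0 ks i - nth 0 ks i.+1 <= x - y.
Proof.
move=> /mem_idx [i [Hi ->]] /mem_idx [j [Hj ->]] Hyx Hx0.
have ij : (i < j)%N.
  case: (ltnP i j) => // ji; have := nth_le _ _ ji Hi; move: Hyx; lia.
have i0 : (1 <= i)%N.
  case: i Hi Hx0 {Hyx ij} => // _; lia.
exists i; split => //; split; first by lia.
have := nth_le _ _ ij Hj; lia.
Qed.

Lemma listB x y : x \in ks -> y \in ks -> y < x -> nth 0 ks (size ks - 1) < y ->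
  exists j, (j.+2 < size ks)%N /\
    nth 0 ks j - nth 0 ks j.+1 <= x - y.
Proof.
move=> /mem_idx [i [Hi ->]] /mem_idx [j [Hj ->]] Hyx Hyl.
have ij : (i < j)%N.
  case: (ltnP i j) => // ji; have := nth_le _ _ ji Hi; move: Hyx; lia.
have jl : (j < size ks - 1)%N.
  case: (ltnP j (size ks - 1)) => // lj.
  have E : j = (size ks - 1)%N by lia.
  by move: Hyl; rewrite E ltxx.
exists i; split; first by lia.
have := nth_le _ _ ij Hj; lia.
Qed.

End Lists.

Lemma top_lemma (S G H : int -> Prop) :
  (forall s, S s <-> exists a b, G a /\ H b /\ s = a + b) ->
  (exists a1 a2, G a1 /\ G a2 /\ a1 < a2) ->
  (exists b1 b2, H b1 /\ H b2 /\ b1 < b2) ->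
  forall t0 t1, S t0 -> (forall s, S s -> s <= t0) -> S t1 -> t1 < t0 ->
  exists x y, S x /\ S y /\ y < x /\ x < t0 /\ x - y <= t0 - t1.
Proof.
move=> HS [a1 [a2 [Ga1 [Ga2 a12]]]] [b1 [b2 [Hb1 [Hb2 b12]]]] t0 t1 St0 Hmax St1 t10.
have := St1; rewrite HS => [[a [b [Ga [Hb Et1]]]]].
have Sab : forall a' b', G a' -> H b' -> S (a' + b').
  by move=> a' b' Ga' Hb'; apply/HS; exists a', b'.
case: (classic (exists a'', G a'' /\ a < a'')) => [[a'' [Ga'' aa]]|na].
  exists (a'' + b1), (a + b1); split; first exact: Sab.
  split; first exact: Sab.
  have := Hmax _ (Sab _ _ Ga'' Hb2); have := Hmax _ (Sab _ _ Ga'' Hb); lia.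
case: (classic (exists b'', H b'' /\ b < b'')) => [[b'' [Hb'' bb]]|nb].
  exists (a1 + b''), (a1 + b); split; first exact: Sab.
  split; first exact: Sab.
  have := Hmax _ (Sab _ _ Ga2 Hb'');
  have := Hmax _ (Sab _ _ Ga Hb''); lia.
exfalso; have := St0; rewrite HS => [[a' [b' [Ga' [Hb' Et0]]]]].
have : ~ (a < a') by move=> aa; apply: na; exists a'.
have : ~ (b < b') by move=> bb; apply: nb; exists b'.
lia.
Qed.

Lemma bot_lemma (S G H : int -> Prop) :
  (forall s, S s <-> exists a b, G a /\ H b /\ s = a + b) ->
  (exists a1 a2, G a1 /\ G a2 /\ a1 < a2) ->
  (exists b1 b2, H b1 /\ H b2 /\ b1 < b2) ->
  forall t0 t1, S t0 -> (forall s, S s -> t0 <= s) -> S t1 -> t0 < t1 ->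
  exists x y, S x /\ S y /\ y < x /\ t0 < y /\ x - y <= t1 - t0.
Proof.
move=> HS [a1 [a2 [Ga1 [Ga2 a12]]]] [b1 [b2 [Hb1 [Hb2 b12]]]] t0 t1 St0 Hmin St1 t01.
have HS' : forall s, S (- s) <-> exists a b, G (- a) /\ H (- b) /\ s = a + b.
  move=> s; rewrite HS; split.
  - move=> [a [b [Ga [Hb E]]]]; exists (- a), (- b); rewrite !opprK; split => //; split => //.
    have -> : s = - - s by rewrite opprK.
    by rewrite E; lia.
  - move=> [a [b [Ga [Hb E]]]]; exists (- a), (- b); split => //; split => //.
    by rewrite E; lia.
have G2 : exists a1 a2, G (- a1) /\ G (- a2) /\ a1 < a2.
  by exists (- a2), (- a1); rewrite !opprK; split => //; split => //; lia.
have H2 : exists b1 b2, H (- b1) /\ H (- b2) /\ b1 < b2.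
  by exists (- b2), (- b1); rewrite !opprK; split => //; split => //; lia.
have St0' : S (- - t0) by rewrite opprK.
have St1' : S (- - t1) by rewrite opprK.
have Hmax' : forall s, S (- s) -> s <= - t0 by move=> s Ss; have := Hmin _ Ss; lia.
have [x [y [Sx [Sy [yx [xt E]]]]]] :=
  @top_lemma (fun s => S (- s)) (fun a => G (- a)) (fun b => H (- b)) HS'
  G2 H2 (- t0) (- t1) St0' Hmax' St1' ltac:(lia).
exists (- y), (- x); split => //; split => //; lia.
Qed.

Lemma two_pts (g : laurent) : lnonzero g -> ~ is_monomial g ->
  exists a1 a2, lcoef g a1 != 0%N /\ lcoef g a2 != 0%N /\ a1 < a2.
Proof.
move=> [k Hk] Hn; apply: NNPP => Hno; apply: Hn.
exists (lcoef g k), k; split; first by rewrite lt0n.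
move=> i; case: eqP => [-> //|ik].
apply/eqP; apply: contraT => Hi; exfalso; apply: Hno.
case: (ltgtP i k) => [ik'|ki|ie]; last by [].
- by exists i, k.
- by exists k, i.
Qed.

Theorem lemma2p6 (f : laurent) : hyper_monolithic f -> monolithic f.
Proof.
rewrite /hyper_monolithic /=; set ks := lsupp f => [[Hm Hcond]].
have mem : forall s, s \in ks <-> lcoef f s != 0%N by move=> s; exact: mem_lsupp.
have srt : sorted rgt ks by exact: sorted_lsupp.
have m0 : forall i, (i < size ks)%N -> lcoef f (nth 0 ks i) != 0%N.
  by move=> i Hi; apply/mem; apply: mem_nth.
split; first by exists (nth 0 ks 0); apply: m0; lia.
move=> g h Hfgh; apply: NNPP => Hn.
have [ng nh] : ~ is_monomial g /\ ~ is_monomial h by tauto.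
pose S s : Prop := lcoef f s != 0%N.
pose G a : Prop := lcoef g a != 0%N.
pose H b : Prop := lcoef h b != 0%N.
have HS : forall s, S s <-> exists a b, G a /\ H b /\ s = a + b.
  by move=> s; rewrite /S Hfgh lmul_nz.
have [a [b [Ga [Hb _]]]] : exists a b, G a /\ H b /\ nth 0 ks 0 = a + b.
  by apply/HS; apply: m0; lia.
have Gtwo := @two_pts g (ex_intro _ a Ga) ng.
have Htwo := @two_pts h (ex_intro _ b Hb) nh.
have Sm : forall s, S s -> exists i, (i < size ks)%N /\ s = nth 0 ks i.
  by move=> s Ss; apply: mem_idx; apply/mem.
have Hmin : forall s, S s -> nth 0 ks (size ks - 1) <= s.
  move=> s /Sm [i [Hi ->]].
  apply: (@nth_le ks srt i (size ks - 1)) => //; lia.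
have H01 : nth 0 ks 1 < nth 0 ks 0 by apply: (@nth_lt ks srt 0 1) => //; lia.
have H12 : nth 0 ks (size ks - 1) < nth 0 ks (size ks - 2).
  by apply: (@nth_lt ks srt) => //; lia.
have Hmax : forall s, S s -> s <= nth 0 ks 0.
  move=> s /Sm [i [Hi ->]].
  apply: (@nth_le ks srt 0 i) => //; lia.
case: Hcond => [C1|C2].
- have [x [y [Sx [Sy [yx [xt E]]]]]] := @top_lemma S G H HS Gtwo Htwo (nth 0 ks 0) (nth 0 ks 1)
    (m0 0%N ltac:(lia))
    Hmax
    (m0 1%N ltac:(lia)) H01.
  have [i [i1 [i2 Ei]]] := @listA ks srt x y (proj2 (mem x) Sx) (proj2 (mem y) Sy) yx xt.
  by have := lt_le_trans (C1 i i1 i2) (le_trans Ei E); rewrite ltxx.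
- have Hl : (size ks - 1 < size ks)%N by lia.
  have Hl2 : (size ks - 2 < size ks)%N by lia.
  have [x [y [Sx [Sy [yx [xt E]]]]]] := @bot_lemma S G H HS Gtwo Htwo (nth 0 ks (size ks - 1)) (nth 0 ks (size ks - 2))
    (m0 _ Hl)
    Hmin
    (m0 _ Hl2) H12.
  have [j [j2 Ej]] := @listB ks srt x y (proj2 (mem x) Sx) (proj2 (mem y) Sy) yx xt.
  by have := lt_le_trans (C2 j j2) (le_trans Ej E); rewrite ltxx.
Qed.
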